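(* Let $R$ be a finite Frobenius ring and let $\psi$ be a primitive additive character of $R$. Let $a,b\in R$. For each principal ideal $D$ of $R$ with $(a)\subseteq D$ and $(b)\subseteq D$, choose a generator $d$ of $D$ and elements $a_0,b_0\in R$ with $a=da_0$, $b=db_0$, and define $$T_D=\sum_{v\in (R/d^\perp)^\times}\psi\big(d\tilde v\big)\,\psi\big(d\,a_0b_0\,\tilde v^{-1}\big)$$ if $d\neq 0$, where $\tilde v\in R^\times$ is any lift of $v$ (so the summand is $K(d.\psi,(a_0b_0).(d.\psi))$ computed over the quotient ring $R/d^\perp$, on which $d.\psi$ is a well-defined primitive character), and $T_D=1$ if $D=(0)$ (this case only occurs when $a=b=0$; it corresponds to the Kloosterman sum over the zero ring). Then $T_D$ and $|d^\perp|$ do not depend on the choices made, and $$\sum_{u\in R^\times}\psi(au+bu^{-1})=\sum_{\substack{D=(d)\text{ principal}\\ (a),(b)\subseteq D}} |d^\perp|\;T_D .$$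
   Context: All rings are finite and commutative with identity; $R^\times$ denotes the unit group. An additive character of $R$ is a group homomorphism $(R,+)\to\mathbb{C}^*$; for $c\in R$ and an additive character $\psi$, $c.\psi$ denotes the character $r\mapsto\psi(cr)$. The conductor of an additive character is the largest ideal on which it is identically $1$; a character is primitive if its conductor is the zero ideal. $R$ is called Frobenius if it admits a primitive additive character. For an ideal $I$ (or element $d$), $I^\perp=\{r\in R: rx=0\ \forall x\in I\}$ and $d^\perp=(d)^\perp$. For additive characters $\phi,\psi$ of a finite ring $S$, the Kloosterman sum is $K(\phi,\psi)=\sum_{u\in S^\times}\phi(u)\psi(u^{-1})$. *)

(* Defs.v *)
From HB Require Import structures.
From mathcomp Require Import all_boot all_order all_algebra all_field.
Set Implicit Arguments. Unset Strict Implicit. Unset Printing Implicit Defensive.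
Import Order.TTheory GRing.Theory Num.Theory.
Local Open Scope ring_scope.

Section Defs.
Variable R : finComUnitRingType.

Definition additive_char (psi : R -> algC) : Prop :=
  (forall x y, psi (x + y) = psi x * psi y) /\ (forall x, psi x != 0).

Definition is_ideal (I : {set R}) : Prop :=
  0 \in I /\ (forall x y, x \in I -> y \in I -> x + y \in I) /\
  (forall r x, x \in I -> r * x \in I).

Definition primitive_char (psi : R -> algC) : Prop :=
  additive_char psi /\
  forall I : {set R}, is_ideal I -> (forall x, x \in I -> psi x = 1) -> I = [set 0].

Definition Frobenius : Prop := exists psi, primitive_char psi.

Definition pideal (d : R) : {set R} := [set d * r | r : R].

Definition principal (D : {set R}) : bool := [exists d, D == pideal d].

Definition perp (I : {set R}) : {set R} := [set r | [forall x in I, r * x == 0]].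

Definition dperp (d : R) : {set R} := perp (pideal d).

(* cosets x + d^perp, i.e. elements of R / d^perp *)
Definition qcoset (d x : R) : {set R} := [set x + t | t in dperp d].

(* units of R / d^perp, as cosets *)
Definition qunits (d : R) : {set {set R}} :=
  [set qcoset d x | x in [set x : R | [exists y : R, x * y - 1 \in dperp d]]].

(* a lift in R^x of a coset (exists for units of the quotient) *)
Definition qlift (C : {set R}) : R :=
  odflt 0 [pick u in C | u \is a GRing.unit].

Definition T (psi : R -> algC) (d a0 b0 : R) : algC :=
  if d == 0 then 1 else
  \sum_(C in qunits d) psi (d * qlift C) * psi (d * (a0 * b0) * (qlift C)^-1).

End Defs.

(* Main.v *)
Require Import Defs.
From HB Require Import structures.
From mathcomp Require Import all_boot all_order all_algebra all_field.
From mathcomp Require Import ring.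
Import Order.TTheory GRing.Theory Num.Theory.
Local Open Scope ring_scope.

Lemma psi0 {R : finComUnitRingType} {psi : R -> algC} :
  additive_char psi -> psi 0 = 1.
Proof.
case=> hadd hnz; have := hadd 0 0; rewrite addr0 => e.
apply/esym/(mulfI (hnz 0)); by rewrite mulr1 -e.
Qed.

Lemma shift_sum0 {R : finComUnitRingType} (g : R -> algC) (P : pred R) (t : R) :
  (forall x y, g (x + y) = g x * g y) -> (forall c, P (c + t) = P c) ->
  g t != 1 -> \sum_(c | P c) g c = 0.
Proof.
move=> gadd HP gt1.
have e : \sum_(c | P c) g c = g t * \sum_(c | P c) g c.
  rewrite {1}(reindex_inj (addIr t)) /=.
  under eq_bigl do rewrite HP.
  rewrite mulr_sumr; apply: eq_bigr => c _; by rewrite gadd mulrC.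
have : (1 - g t) * \sum_(c | P c) g c = 0 by rewrite mulrBl mul1r -e subrr.
move/eqP; rewrite mulf_eq0 subr_eq0 eq_sym (negbTE gt1) /=; by move/eqP.
Qed.

Lemma nontriv {R : finComUnitRingType} {psi : R -> algC} {I : {set R}} :
  primitive_char psi -> is_ideal I -> I != [set 0] ->
  exists2 t, t \in I & psi t != 1.
Proof.
move=> [_ hp] hI hI0.
case: (boolP [exists t in I, psi t != 1]) => [/existsP[t /andP[? ?]]|/existsPn H].
  by exists t.
exfalso; move/negP: hI0; apply; apply/eqP; apply: hp => // x xI.
by have := H x; rewrite xI /= negbK => /eqP.
Qed.

Lemma pidealP {R : finComUnitRingType} (d y : R) :
  reflect (exists s, y = d * s) (y \in pideal d).
Proof.
apply: (iffP imsetP) => [[s _ ->]|[s ->]]; by exists s.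
Qed.

Lemma pideal_ideal {R : finComUnitRingType} (d : R) : is_ideal (pideal d).
Proof.
split; first by apply/pidealP; exists 0; rewrite mulr0.
split.
  move=> x y /pidealP[s ->] /pidealP[s' ->]; apply/pidealP; exists (s + s').
  by rewrite mulrDr.
move=> r x /pidealP[s ->]; apply/pidealP; exists (r * s).
by rewrite mulrA [r * d]mulrC mulrA.
Qed.

Lemma sum_psi_mul {R : finComUnitRingType} (psi : R -> algC) (y : R) :
  primitive_char psi ->
  \sum_(r : R) psi (r * y) = if y == 0 then #|R|%:R else 0.
Proof.
move=> hp; case: eqP => [->|/eqP y0].
  under eq_bigr do rewrite mulr0 (psi0 hp.1).
  by rewrite sumr_const.
have : pideal y != [set 0].
  apply/negP=> /eqP e; have : y \in pideal y by apply/pidealP; exists 1; rewrite mulr1.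
  by rewrite e inE (negbTE y0).
case/(nontriv hp (pideal_ideal y)) => t /pidealP[s ->] hs.
apply: (@shift_sum0 _ (fun r => psi (r * y)) predT s) => //.
  by move=> x z; rewrite mulrDl hp.1.1.
by rewrite mulrC.
Qed.

Lemma dperpP {R : finComUnitRingType} (d r : R) : (r \in dperp d) = (r * d == 0).
Proof.
apply/idP/idP.
  rewrite inE => /forall_inP H; apply: H; apply/pidealP; exists 1; by rewrite mulr1.
move/eqP=> h; rewrite inE; apply/forall_inP => y /pidealP[s ->].
by rewrite mulrA h mul0r.
Qed.

Lemma subpidealP {R : finComUnitRingType} (a x : R) :
  reflect (exists s, a = x * s) (pideal a \subset pideal x).
Proof.
apply: (iffP idP).
  move/subsetP=> H; apply/pidealP/H/pidealP; exists 1; by rewrite mulr1.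
move=> [s ->]; apply/subsetP=> y /pidealP[r ->]; apply/pidealP; exists (s * r).
by rewrite mulrA.
Qed.

Lemma nonunit_ann {R : finComUnitRingType} (u : R) :
  u \notin GRing.unit -> exists2 t, t != 0 & t * u = 0.
Proof.
move=> hu.
have : ~~ injectiveb (fun t : R => t * u).
  apply/negP=> /injectiveP inj.
  have [v _ vK] : bijective (fun t : R => t * u) by apply: injF_bij.
  move/negP: hu; apply; apply/unitrPr; exists (v 1); by rewrite mulrC vK.
case/injectivePn=> y [z yz e]; exists (y - z); first by rewrite subr_eq0.
by rewrite mulrBl e subrr.
Qed.

Lemma double_ann {R : finComUnitRingType} (psi : R -> algC) (x a : R) :
  primitive_char psi -> (forall t, x * t = 0 -> a * t = 0) -> exists s, a = x * s.
Proof.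
move=> hp H.
set A := \sum_(r : R) \sum_(s : R) psi (r * (x * s - a)).
have e1 : A = #|R|%:R *+ #|[pred s | x * s == a]|.
  rewrite /A exchange_big /= -sumr_const [RHS]big_mkcond /=; apply: eq_bigr => s _; rewrite inE.
  by rewrite sum_psi_mul // subr_eq0.
have e2 : A = #|R|%:R *+ #|[pred r | r * x == 0]|.
  rewrite /A -sumr_const [RHS]big_mkcond /=; apply: eq_bigr => r _; rewrite inE.
  have ee : forall s, psi (r * (x * s - a)) = psi (- (r * a)) * psi (s * (r * x)).
    move=> s; rewrite -hp.1.1; congr psi.
    ring.
  under eq_bigr do rewrite ee.
  rewrite -mulr_sumr sum_psi_mul //; case: ifP => [/eqP rx|]; last by rewrite mulr0.
  have -> : r * a = 0 by rewrite mulrC; apply: H; rewrite mulrC.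
  by rewrite oppr0 (psi0 hp.1) mul1r.
have : #|[pred s | x * s == a]| = #|[pred r | r * x == 0]|.
  move: e2; rewrite e1 -!mulrnA => /eqP; rewrite eqr_nat.
  rewrite eqn_mul2l; case/orP => [|/eqP //].
  by rewrite (cardD1 (0 : R)).
have : (0 : R) \in [pred r | r * x == 0] by rewrite inE mul0r.
move=> h0 /esym ec.
have : (0 < #|[pred s : R | (x * s == a)%R]|)%N by rewrite -ec; apply/card_gt0P; exists 0.
case/card_gt0P => s; rewrite inE => /eqP <-; by exists s.
Qed.


Lemma pow_idem {R : finComUnitRingType} (m : R) :
  exists n, (0 < n)%N /\ m ^+ (n + n) = m ^+ n.
Proof.
pose f := fun k : 'I_(#|R|.+1) => m ^+ k.
have : ~~ injectiveb f.
  apply/negP=> /injectiveP /leq_card; by rewrite card_ord ltnn.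
case/injectivePn => i [j ij fij].
have [i0 [p [p0 per]]] : exists i0 p, (0 < p)%N /\ m ^+ (i0 + p) = m ^+ i0.
  case: (ltngtP i j) => [lt|lt|/val_inj e]; last by rewrite e eqxx in ij.
    exists i, (j - i)%N; rewrite subn_gt0 lt; split => //.
    rewrite (subnKC (ltnW lt)); exact: (esym fij).
  exists j, (i - j)%N; rewrite subn_gt0 lt; split => //.
  rewrite (subnKC (ltnW lt)); exact: fij.
have perk : forall k, (i0 <= k)%N -> m ^+ (k + p) = m ^+ k.
  move=> k ik; have -> : k = (i0 + (k - i0))%N by rewrite subnKC.
  by rewrite addnAC exprD per -exprD.
have perq : forall q k, (i0 <= k)%N -> m ^+ (k + q * p) = m ^+ k.
  elim=> [|q IH] k ik; first by rewrite mul0n addn0.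
  rewrite mulSn addnA IH ?perk //; exact: (leq_trans ik (leq_addr _ _)).
exists (p * i0.+1)%N; split; first by rewrite muln_gt0 p0.
have := perq i0.+1 (p * i0.+1)%N; rewrite [(i0.+1 * p)%N]mulnC; apply.
apply: (leq_trans (leqnSn i0)); by rewrite leq_pmull.
Qed.

Lemma unit_lift {R : finComUnitRingType} (x y d : R) :
  (x * y - 1) * d = 0 -> exists2 u, u \is a GRing.unit & (u - x) * d = 0.
Proof.
move=> h.
have md1 : x * y * d = d by apply/eqP; rewrite -subr_eq0 -{2}[d]mul1r -mulrBl h.
set m := x * y in md1 *.
have [n [n0 idem]] := pow_idem m.
set e := m ^+ n.
have ee : e * e = e by rewrite /e -exprD.
have md : forall k, m ^+ k * d = d.
  elim=> [|k IH]; first by rewrite expr0 mul1r.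
  by rewrite exprS -mulrA IH.
have ed : (1 - e) * d = 0 by rewrite mulrBl mul1r md subrr.
set w := y * m ^+ n.-1.
have xw : x * w = e by rewrite /w mulrA -/m -exprS prednK.
exists (1 - e + e * x).
  apply/unitrPr; exists (w * e + 1 - e).
  have -> : (1 - e + e*x) * (w*e + 1 - e) =
      1 + (e*e - e)*(2 + e - w - x) + e*e*(x*w - e) by ring.
  by rewrite ee xw !subrr mulr0 mul0r !addr0.
have -> : 1 - e + e * x - x = (1 - e) * (1 - x) by ring.
by rewrite mulrC mulrA [d * _]mulrC ed mul0r.
Qed.


Lemma qcosetP {R : finComUnitRingType} (d x z : R) :
  (z \in qcoset d x) = ((z - x) * d == 0).
Proof.
apply/imsetP/idP => [[t ht ->]|h].
  by rewrite addrC addKr -dperpP.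
exists (z - x); first by rewrite dperpP.
by rewrite addrC subrK.
Qed.

Lemma qunitsP {R : finComUnitRingType} {d : R} {C : {set R}} :
  C \in qunits d -> exists x y, (x * y - 1) * d = 0 /\ C = qcoset d x.
Proof.
case/imsetP=> x; rewrite inE => /existsP[y]; rewrite dperpP => /eqP h ->.
by exists x, y.
Qed.

Lemma qlift_spec {R : finComUnitRingType} {d : R} {C : {set R}} :
  C \in qunits d -> qlift C \is a GRing.unit /\ qlift C \in C.
Proof.
case/qunitsP=> x [y [h ->]].
have [u uU hu] := unit_lift _ _ _ h.
rewrite /qlift; case: pickP => [v /andP[h1 h2]|H] /=; first by [].
by have := H u; rewrite qcosetP hu eqxx uU.
Qed.

Lemma qlift_mul {R : finComUnitRingType} {d x : R} {C : {set R}} :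
  C \in qunits d -> (qlift C \in qcoset d x) -> d * qlift C = d * x.
Proof.
move=> _; rewrite qcosetP mulrBl subr_eq0 => /eqP.
by rewrite [qlift C * d]mulrC [x * d]mulrC.
Qed.

Lemma pideal_eqP {R : finComUnitRingType} (x d : R) :
  reflect ((exists v, x = d * v) /\ (exists w, d = x * w)) (pideal x == pideal d).
Proof.
rewrite eqEsubset; apply: (iffP andP) => [[/subpidealP h1 /subpidealP h2]|[h1 h2]].
  by [].
by split; apply/subpidealP.
Qed.

Lemma image_qunits {R : finComUnitRingType} (d : R) :
  [set x | pideal x == pideal d] = [set d * qlift C | C in qunits d].
Proof.
apply/setP=> x; rewrite inE; apply/pideal_eqP/imsetP.
  move=> [[v ->] [w dw]].
  have h : (v * w - 1) * d = 0.
    have -> : (v * w - 1) * d = d * v * w - d by ring.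
    by rewrite -dw subrr.
  have hC : qcoset d v \in qunits d.
    apply/imsetP; exists v => //; rewrite inE; apply/existsP; exists w.
    by rewrite dperpP h.
  exists (qcoset d v) => //; apply/esym/qlift_mul => //.
  by case: (qlift_spec hC).
move=> [C hC ->]; have [x0 [y [h eC]]] := qunitsP hC.
have [_ hl] := qlift_spec hC; move: (hl); rewrite {2}eC => hl'.
rewrite (qlift_mul hC hl'); split; first by exists x0.
exists y; move: h; rewrite mulrBl mul1r => /eqP; rewrite subr_eq0 => /eqP.
by rewrite mulrC mulrA.
Qed.

Lemma phi_inj {R : finComUnitRingType} (d : R) :
  {in qunits d &, injective (fun C => d * qlift C)}.
Proof.
move=> C1 C2 h1 h2 /= e.
have [x1 [y1 [_ e1]]] := qunitsP h1.
have [x2 [y2 [_ e2]]] := qunitsP h2.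
have m1 : d * qlift C1 = d * x1.
  have q1 := (qlift_spec h1).2; rewrite {2}e1 in q1; exact: qlift_mul h1 q1.
have m2 : d * qlift C2 = d * x2.
  have q2 := (qlift_spec h2).2; rewrite {2}e2 in q2; exact: qlift_mul h2 q2.
rewrite e1 e2; apply/setP=> z; rewrite !qcosetP !mulrBl [x1 * d]mulrC [x2 * d]mulrC.
by rewrite -m1 -m2 e.
Qed.

Lemma Kunit {R : finComUnitRingType} (psi : R -> algC) (a b d a0 b0 u : R) :
  additive_char psi -> u \is a GRing.unit -> a = d * a0 -> b = d * b0 ->
  \sum_(b1 | d * u * b1 == b) psi (d * u + a * b1) =
  #|dperp d|%:R * (psi (d * u) * psi (d * (a0 * b0) * u^-1)).
Proof.
move=> hp uU ea eb.
have c : forall b1, d * u * b1 == b ->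
    psi (d * u + a * b1) = psi (d * u) * psi (d * (a0 * b0) * u^-1).
  move=> b1 /eqP h; rewrite hp.1; congr (_ * psi _).
  have db1 : d * b1 = d * b0 * u^-1.
    by rewrite -eb -h -[d * u * b1]mulrA [u * b1]mulrC mulrA mulrK.
  rewrite ea; transitivity (a0 * (d * b1)); first by ring.
  rewrite db1; ring.
rewrite (eq_bigr _ c) sumr_const mulr_natl; congr (_ *+ _).
set S := [set b1 | d * u * b1 == b].
have -> : dperp d = [set u * b1 - b0 | b1 in S].
  apply/setP=> t; rewrite dperpP; apply/idP/imsetP.
    move/eqP=> td; exists (u^-1 * (t + b0)).
      rewrite inE eb -mulrA mulVKr // mulrDr [d * t]mulrC td add0r //.
    by rewrite mulVKr // addrK.
  move=> [b1]; rewrite inE eb => /eqP h ->.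
  have -> : (u * b1 - b0) * d = d * u * b1 - d * b0 by ring.
  by rewrite h subrr.
rewrite card_imset; last by move=> x1 x2 /addIr /(mulrI uU).
by apply: eq_card => b1; rewrite inE.
Qed.


Lemma termD {R : finComUnitRingType} (psi : R -> algC) (a b d a0 b0 : R) :
  additive_char psi -> a = d * a0 -> b = d * b0 ->
  #|dperp d|%:R * T psi d a0 b0 =
  \sum_(x | pideal x == pideal d) \sum_(b1 | x * b1 == b) psi (x + a * b1).
Proof.
move=> hp ea eb; rewrite /T; case: eqP => [d0|/eqP d0].
  subst d; rewrite mul0r in ea eb; subst a b.
  rewrite (big_pred1 0); last first.
    move=> x /=; apply/pideal_eqP/eqP => [[[v ->] _]|->]; first by rewrite mul0r.
    by split; exists 0; rewrite mul0r.
  under eq_bigl do rewrite !mul0r eqxx.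
  under eq_bigr do rewrite mul0r addr0 (psi0 hp).
  rewrite sumr_const mulr1; congr (_%:R).
  by apply: eq_card => r; rewrite dperpP mulr0 eqxx.
rewrite (eq_bigl (fun x => x \in [set x | pideal x == pideal d])); last first.
  by move=> x; rewrite inE.
rewrite image_qunits (big_imset _ (phi_inj d)).
rewrite mulr_sumr; apply: eq_bigr => C hC.
have [uU _] := qlift_spec hC.
by rewrite (Kunit psi a b d a0 b0 (qlift C) hp uU ea eb).
Qed.

Lemma lhs_step1 {R : finComUnitRingType} (psi : R -> algC) (a b : R) :
  primitive_char psi ->
  \sum_(u : R | u \is a GRing.unit) psi (a * u + b * u^-1) =
  \sum_(u : R) \sum_(c | c * u == b) psi (a * u + c).
Proof.
move=> hp.
rewrite [RHS](bigID (fun u => u \is a GRing.unit)) /=.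
rewrite [X in _ = _ + X]big1 ?addr0; last first.
  move=> u nu; have [t t0 tu] := nonunit_ann u nu.
  have hI : is_ideal [set t | t * u == 0].
    split; first by rewrite inE mul0r.
    split; first by move=> x y; rewrite !inE mulrDl => /eqP -> /eqP ->; rewrite addr0.
    by move=> r x; rewrite !inE -mulrA => /eqP ->; rewrite mulr0.
  have hI0 : [set t | t * u == 0] != [set 0].
    apply/negP=> /eqP e; have : t \in [set t | t * u == 0] by rewrite inE tu.
    by rewrite e inE (negbTE t0).
  have [t' ht' pt'] := nontriv hp hI hI0.
  under eq_bigr do rewrite hp.1.1.
  rewrite -mulr_sumr (@shift_sum0 _ psi (fun c => c * u == b) t') ?mulr0 //.
    exact: hp.1.1.
  by move=> c; rewrite mulrDl; move: ht'; rewrite inE => /eqP ->; rewrite addr0.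
apply: eq_bigr => u uU.
rewrite (big_pred1 (b * u^-1)) //.
move=> c /=; apply/eqP/eqP => [<-|->]; first by rewrite mulrK.
by rewrite mulrVK.
Qed.

Lemma lhs_eq {R : finComUnitRingType} (psi : R -> algC) (a b : R) :
  primitive_char psi ->
  \sum_(u : R | u \is a GRing.unit) psi (a * u + b * u^-1) =
  \sum_(x | (pideal a \subset pideal x) && (pideal b \subset pideal x))
     \sum_(b1 | x * b1 == b) psi (x + a * b1).
Proof.
move=> hp; rewrite lhs_step1 // (exchange_big_dep predT) //=.
have -> : \sum_(c : R) \sum_(u | true && (c * u == b)) psi (a * u + c) =
          \sum_(x : R) \sum_(b1 | x * b1 == b) psi (x + a * b1).
  apply: eq_bigr => x _; apply: eq_big => [b1|b1 _]; first by [].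
  by rewrite addrC.
rewrite [LHS](bigID (fun x => (pideal a \subset pideal x) && (pideal b \subset pideal x))) /=.
rewrite [X in _ + X]big1 ?addr0 //.
move=> x nQ.
case: (boolP (pideal b \subset pideal x)) => hb; last first.
  apply: big_pred0 => b1; apply/negP => /eqP h; move/negP: hb; apply.
  apply/subpidealP; by exists b1.
have ha : ~~ (pideal a \subset pideal x) by rewrite hb andbT in nQ.
case: (boolP [exists t, (x * t == 0) && (psi (a * t) != 1)]) =>
    [/existsP[t /andP[/eqP xt pt]]|/existsPn H].
  under eq_bigr do rewrite hp.1.1.
  rewrite -mulr_sumr (@shift_sum0 _ (fun b1 => psi (a * b1)) (fun b1 => x * b1 == b) t) ?mulr0 //.
    by move=> y z; rewrite mulrDr hp.1.1.
  by move=> c; rewrite mulrDr xt addr0.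
exfalso; move/negP: ha; apply; apply/subpidealP; apply: (double_ann psi x a hp).
move=> t xt.
set I := [set a * s | s in [set s | x * s == 0]].
have hI : is_ideal I.
  split; first by apply/imsetP; exists 0; rewrite ?inE mulr0.
  split.
    move=> y z /imsetP[s1 hs1 ->] /imsetP[s2 hs2 ->]; apply/imsetP; exists (s1 + s2).
      by move: hs1 hs2; rewrite !inE mulrDr => /eqP -> /eqP ->; rewrite addr0.
    by rewrite mulrDr.
  move=> r y /imsetP[s hs ->]; apply/imsetP; exists (r * s).
    by move: hs; rewrite !inE mulrCA => /eqP ->; rewrite mulr0.
  by rewrite mulrCA.
have I1 : forall y, y \in I -> psi y = 1.
  move=> y /imsetP[s]; rewrite inE => /eqP xs ->.
  by have := H s; rewrite xs eqxx /= negbK => /eqP.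
have eI := hp.2 I hI I1.
have : a * t \in I by apply/imsetP; exists t; rewrite // inE xt.
by rewrite eI inE => /eqP.
Qed.


Theorem mainTheorem1 (R : finComUnitRingType) (psi : R -> algC)
  (hF : Frobenius R) (hpsi : primitive_char psi) (a b : R) :
  (forall (D : {set R}) (d d' a0 b0 a0' b0' : R),
      D = pideal d -> D = pideal d' ->
      a = d * a0 -> b = d * b0 -> a = d' * a0' -> b = d' * b0' ->
      T psi d a0 b0 = T psi d' a0' b0' /\ #|dperp d| = #|dperp d'|) /\
  (forall (gen a0f b0f : {set R} -> R),
      (forall D : {set R}, principal D -> pideal a \subset D -> pideal b \subset D ->
         [/\ D = pideal (gen D), a = gen D * a0f D & b = gen D * b0f D]) ->
      \sum_(u : R | u \is a GRing.unit) psi (a * u + b * u^-1) =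
      \sum_(D : {set R} | [&& principal D, pideal a \subset D & pideal b \subset D])
         (#|dperp (gen D)|%:R * T psi (gen D) (a0f D) (b0f D))).
Proof.
split.
  move=> D d d' a0 b0 a0' b0' eD eD' ea eb ea' eb'.
  have cd : #|dperp d| = #|dperp d'| by rewrite /dperp -eD -eD'.
  split => //.
  have t1 := termD psi a b d a0 b0 hpsi.1 ea eb.
  have t2 := termD psi a b d' a0' b0' hpsi.1 ea' eb'.
  rewrite -eD in t1; rewrite -eD' -cd -t1 in t2.
  have nz : (#|dperp d|%:R : algC) != 0.
    rewrite pnatr_eq0 -lt0n; apply/card_gt0P; exists 0.
    by rewrite dperpP mul0r.
  exact: (mulfI nz (esym t2)).
move=> gen a0f b0f hgen.
rewrite lhs_eq //.
rewrite (partition_big (@pideal R) (fun D => [&& principal D, pideal a \subset D & pideal b \subset D])).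
  apply: eq_bigr => D /and3P[pD haD hbD].
  have [eD ea eb] := hgen D pD haD hbD.
  rewrite (termD psi a b _ _ _ hpsi.1 ea eb) -eD.
  apply: eq_bigl => x; case: eqP => [->|]; by rewrite ?haD ?hbD ?andbF.
move=> x /andP[h1 h2]; rewrite h1 h2 andbT /principal andbT; apply/existsP; by exists x.
Qed.
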